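(* Let $\mathcal{V}$ and $\mathcal{X}$ be finite sets, let $k\ge1$, $T\ge1$ be integers, and let $f:2^{\mathcal{V}\times\mathcal{X}}\to\mathbb{R}_{\ge0}$ satisfy $f(\emptyset)=0$ and be monotone and submodular: for all $W_1\subseteq W_2\subseteq\mathcal{V}\times\mathcal{X}$ and all $W\subseteq\mathcal{V}\times\mathcal{X}$, $f(W_2)\ge f(W_1)$ and $\Delta(W\mid W_1)\ge\Delta(W\mid W_2)$, where $\Delta(A\mid S)=f(S\cup A)-f(S)$. Suppose moreover there is a constant $C(k)>0$ such that for every $x\in\mathcal{X}$ and every $S\subseteq\mathcal{V}\times\mathcal{X}$ there exists $R(x,S)\subseteq\mathcal{V}$ with $|R(x,S)|\le k$ and $$\Delta\big(R(x,S)\times\{x\}\mid S\big)\ge C(k)\,\Delta\big(\mathcal{V}\times\{x\}\mid S\big).$$ Define the two-stage greedy sequence by $S_0=\emptyset$ and, for $t=1,\dots,T$, $$x_t\in\arg\max_{x\in\mathcal{X}}\Delta(\mathcal{V}\times\{x\}\mid S_{t-1}),\qquad R_t\in\arg\max_{R\subseteq\mathcal{V},\,|R|\le k}\Delta(R\times\{x_t\}\mid S_{t-1}),\qquad S_t=S_{t-1}\cup(R_t\times\{x_t\}).$$ Then for every sequence $(R_1^*,x_1^* ),\dots,(R_T^*,x_T^* )$ with $R_t^*\subseteq\mathcal{V}$, $|R_t^*|\le k$ and pairwise distinct $x_1^*,\dots,x_T^*\in\mathcal{X}$, setting $S_T^*=\bigcup_{t=1}^T R_t^*\times\{x_t^*\}$,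 $$f(S_T^* )\le\frac{2}{1-e^{-2C(k)}}\,f(S_T).$$
   Context: A pair $(R,x)$ with $R\subseteq\mathcal{V}$ (respondents), $x\in\mathcal{X}$ (query) is identified with the set $R\times\{x\}\subseteq\mathcal{V}\times\mathcal{X}$; histories are unions of such sets. The first stage chooses the query that would be most informative if asked to all respondents; the second stage chooses at most $k$ respondents for that query. *)

(* Defs.v *)
From HB Require Import structures.
From mathcomp Require Import all_boot all_order all_algebra.
From mathcomp Require Import reals.
From mathcomp Require Import sequences exp.
Set Implicit Arguments. Unset Strict Implicit. Unset Printing Implicit Defensive.
Import Order.TTheory GRing.Theory Num.Theory.
Local Open Scope ring_scope.

Section Defs.
Variables (R : realType) (V X : finType).

Definition marg (f : {set (V * X)} -> R) (A S : {set (V * X)}) : R :=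
  f (S :|: A) - f S.

Definition pairset (Rs : {set V}) (x : X) : {set (V * X)} := setX Rs [set x].

Definition hist (xs : nat -> X) (Rs : nat -> {set V}) (t : nat) : {set (V * X)} :=
  \bigcup_(i < t) pairset (Rs i) (xs i).

(* (xs, Rs) is a run of the two-stage greedy procedure for T steps:
   step t+1 (0-indexed t < T) chooses xs t and Rs t from S_t = hist xs Rs t. *)
Definition two_stage_greedy (f : {set (V * X)} -> R) (k T : nat)
    (xs : nat -> X) (Rs : nat -> {set V}) : Prop :=
  forall t, (t < T)%N ->
    [/\ forall x, marg f (pairset [set: V] x) (hist xs Rs t)
                  <= marg f (pairset [set: V] (xs t)) (hist xs Rs t),
        (#|Rs t| <= k)%N &
        forall R' : {set V}, (#|R'| <= k)%N ->
          marg f (pairset R' (xs t)) (hist xs Rs t)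
          <= marg f (pairset (Rs t) (xs t)) (hist xs Rs t)].
End Defs.

(* Main.v *)
Require Import Defs.
From HB Require Import structures.
From mathcomp Require Import all_boot all_order all_algebra.
From mathcomp Require Import reals.
From mathcomp Require Import sequences exp.
From mathcomp Require Import ring lra.
Import Order.TTheory GRing.Theory Num.Theory.
Local Open Scope ring_scope.

Lemma marg_union_le {R : realType} {V X : finType} {f : {set (V * X)} -> R}
    (f_submod : forall W1 W2 W : {set (V * X)}, W1 \subset W2 ->
        marg f W W2 <= marg f W W1)
    (I : Type) (r : seq I) (F : I -> {set (V * X)}) (S : {set (V * X)}) :
  marg f (\bigcup_(i <- r) F i) S <= \sum_(i <- r) marg f (F i) S.
Proof.
elim: r => [|a r IH].
  by rewrite !big_nil /marg setU0 subrr.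
rewrite !big_cons.
have -> : marg f (F a :|: \bigcup_(j <- r) F j) S =
          marg f (F a) S + marg f (\bigcup_(j <- r) F j) (S :|: F a).
  by rewrite /marg setUA; ring.
apply: lerD; first exact: lexx.
apply: le_trans _ IH.
by apply: f_submod; apply: subsetUl.
Qed.

Theorem mainTheorem2 (R : realType) (V X : finType) (k T : nat)
    (f : {set (V * X)} -> R) (C : R)
    (hk : (1 <= k)%N) (hT : (1 <= T)%N)
    (f_nonneg : forall W, 0 <= f W)
    (f_empty : f set0 = 0)
    (f_mono : forall W1 W2 : {set (V * X)}, W1 \subset W2 -> f W1 <= f W2)
    (f_submod : forall W1 W2 W : {set (V * X)}, W1 \subset W2 ->
        marg f W W2 <= marg f W W1)
    (hC : 0 < C)
    (hRk : forall (x : X) (S : {set (V * X)}), exists Rx : {set V},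
        (#|Rx| <= k)%N /\
        C * marg f (pairset [set: V] x) S <= marg f (pairset Rx x) S)
    (xs : nat -> X) (Rs : nat -> {set V})
    (hgreedy : two_stage_greedy f k T xs Rs)
    (xstar : 'I_T -> X) (Rstar : 'I_T -> {set V})
    (hxstar : injective xstar)
    (hRstar : forall t, (#|Rstar t| <= k)%N) :
  f (\bigcup_(t < T) pairset (Rstar t) (xstar t))
    <= 2 / (1 - expR (- (2 * C))) * f (hist xs Rs T).
Proof.
set U := \bigcup_(t < T) pairset (Rstar t) (xstar t).
set OPT := f U.
pose g t := f (hist xs Rs t).
have histS t : hist xs Rs t.+1 = hist xs Rs t :|: pairset (Rs t) (xs t).
  by rewrite /hist big_ord_recr.
have gmono t : g t <= g t.+1.
  by rewrite /g histS; apply: f_mono; apply: subsetUl.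
have TR : 0 < T%:R :> R by rewrite ltr0n.
have key t : (t < T)%N -> C * (OPT - g t) <= T%:R * (g t.+1 - g t).
  move=> Ht; case: (hgreedy t Ht) => hx _ hR.
  set S := hist xs Rs t.
  set M := marg f (pairset [set: V] (xs t)) S.
  have h1 : OPT - g t <= \sum_(j < T) marg f (pairset (Rstar j) (xstar j)) S.
    apply: le_trans _ (marg_union_le f_submod _ (index_enum 'I_T) (fun j => pairset (Rstar j) (xstar j)) S).
    rewrite /marg /g -/S; apply: lerB; last exact: lexx.
    by apply: f_mono; apply: subsetUr.
  have h2 : \sum_(j < T) marg f (pairset (Rstar j) (xstar j)) S <= T%:R * M.
    have -> : T%:R * M = \sum_(j < T) M by rewrite sumr_const card_ord mulr_natl.
    apply: ler_sum => j _; apply: le_trans _ (hx (xstar j)).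
    rewrite /marg; apply: lerB; last exact: lexx.
    apply: f_mono; apply: setUS; apply: setXS; [exact: subsetT | exact: subxx].
  have h3 : C * M <= g t.+1 - g t.
    case: (hRk (xs t) S) => Rx [HRx HC]; apply: le_trans HC _.
    apply: le_trans (hR _ HRx) _.
    by rewrite /marg /g histS -/S.
  have hM : C * (OPT - g t) <= C * (T%:R * M).
    by apply: ler_wpM2l; [exact: ltW | exact: le_trans h1 h2].
  apply: le_trans hM _.
  rewrite mulrA (mulrC C) -mulrA; apply: ler_wpM2l => //; exact: ltW.
set q := Num.max (1 - C / T%:R) 0.
have q0 : 0 <= q by rewrite le_max lexx orbT.
have CT0 : 0 <= C / T%:R by apply: divr_ge0; apply: ltW.
have q1 : q <= 1 by rewrite ge_max ler01 andbT; lra.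
have step t : (t < T)%N -> OPT - g t.+1 <= q * (OPT - g t).
  move=> Ht; have hk' := key t Ht; have hg := gmono t.
  case: (lerP 0 (OPT - g t)) => hD.
    apply: (@le_trans _ _ ((1 - C / T%:R) * (OPT - g t))); last first.
      by apply: ler_wpM2r => //; rewrite le_max lexx.
    have -> : (1 - C / T%:R) * (OPT - g t) = (OPT - g t) - C * (OPT - g t) / T%:R.
      by field; rewrite lt0r_neq0.
    have : C * (OPT - g t) / T%:R <= g t.+1 - g t.
      by rewrite ler_pdivrMr // [X in _ <= X]mulrC.
    lra.
  have : 0 <= (1 - q) * (- (OPT - g t)).
    apply: mulr_ge0; lra.
  nra.
have bound n : (n <= T)%N -> OPT - g n <= q ^+ n * OPT.
  elim: n => [|n IH] Hn.
    by rewrite /g /hist big_ord0 f_empty expr0 mul1r subr0.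
  apply: le_trans (step n Hn) _.
  rewrite exprS -mulrA; apply: ler_wpM2l => //; apply: IH; exact: ltnW.
have qe : q <= expR (- (C / T%:R)).
  rewrite ge_max (ltW (expR_gt0 _)) andbT.
  by apply: le_trans _ (expR_ge1Dx _); rewrite lexx.
have qT : q ^+ T <= expR (- C).
  have -> : - C = T%:R * (- (C / T%:R)) by field; rewrite lt0r_neq0.
  rewrite expRM_natl; apply: lerXn2r => //; rewrite nnegrE //; exact: ltW (expR_gt0 _).
set E := expR (- C).
have E0 : 0 < E by apply: expR_gt0.
have E1 : E < 1 by rewrite expR_lt1 oppr_lt0.
have E2 : expR (- (2 * C)) = E ^+ 2 by rewrite -expRM_natl mulrN.
have OPT0 : 0 <= OPT by apply: f_nonneg.
have gT0 : 0 <= g T by apply: f_nonneg.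
have hb : OPT - g T <= E * OPT.
  apply: le_trans (bound T (leqnn T)) _; apply: ler_wpM2r => //.
rewrite E2 -/(g T).
have den : 0 < 1 - E ^+ 2 by rewrite expr2; nra.
rewrite mulrC mulrA ler_pdivlMr //.
nra.
Qed.
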